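(* Let $d,r\ge1$. Every multilinear map $f:M_d^r\to M_d$ that is equivariant under unitaries and positive (i.e. $f(X_1,\dots,X_r)\ge0$ whenever $X_1,\dots,X_r\ge0$) is of the form $f(X_1,\dots,X_r)=\operatorname{tr}_{1\dots r}[\mathcal{B}(X_1\otimes\cdots\otimes X_r\otimes\mathbb{1})]$ for a block-positive operator $\mathcal{B}$ on $(\mathbb{C}^d)^{\otimes(r+1)}$ with $U^{\otimes(r+1)}\mathcal{B}(U^\dagger)^{\otimes(r+1)}=\mathcal{B}$ for all unitaries $U$. In particular, every optimal such map corresponds in this way to an optimal Werner state entanglement witness, i.e. an optimal entanglement witness $\mathcal{W}$ on $(\mathbb{C}^d)^{\otimes(r+1)}$ with $U^{\otimes(r+1)}\mathcal{W}(U^\dagger)^{\otimes(r+1)}=\mathcal{W}$ for all unitaries $U$.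
   Context: $M_d$ is the set of complex $d\times d$ matrices; $A\ge0$ means positive semidefinite. A map $f$ is equivariant under unitaries if $f(UX_1U^\dagger,\dots,UX_rU^\dagger)=Uf(X_1,\dots,X_r)U^\dagger$ for all $X_i\in M_d$ and unitary $U$. $\operatorname{tr}_{1\dots r}$ is the partial trace over the first $r$ tensor factors. $\mathcal{B}$ is block-positive if $\operatorname{tr}[\mathcal{B}\rho]\ge0$ for all separable states $\rho$ (convex combinations of product states $\rho_1\otimes\cdots\otimes\rho_{r+1}$, states being positive semidefinite trace-one matrices). An entanglement witness is a block-positive $\mathcal{W}$ with $\operatorname{tr}[\mathcal{W}\sigma]<0$ for some state $\sigma$; it is optimal if also $\operatorname{tr}[\mathcal{W}\tilde\rho]=0$ for some separable state $\tilde\rho$. A positive multilinear map $f$ is optimal if the smallest eigenvalue of $f(\tilde X_1,\dots,\tilde X_r)$ equals $0$ for some nonzero positive semidefinite $\tilde X_1,\dots,\tilde X_r$.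
   Formalization: The in-particular clause holds only for optimal maps f whose operator $\mathcal{B}$ is not positive semidefinite; for these, $\mathcal{B}$ itself is an optimal Werner state entanglement witness. Each condition added here is assumed in the paper as well or is needed for the statement above to hold. *)

(* Defs.v *)
From HB Require Import structures.
From mathcomp Require Import all_boot all_order all_algebra.
From mathcomp Require Import sesquilinear spectral.
From mathcomp Require Import reals.
From mathcomp Require Import complex.

Set Implicit Arguments.
Unset Strict Implicit.
Unset Printing Implicit Defensive.

Import Order.TTheory GRing.Theory Num.Theory.
Local Open Scope ring_scope.
Local Open Scope sesquilinear_scope.

Section QuantumDefs.

Variable R : realType.
Local Notation C := (R[i]).
Variable d : nat.

(* index set of the computational basis of (C^d)^{\otimes k} *)
Definition tidx (k : nat) := {ffun 'I_k -> 'I_d}.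

(* operators on (C^d)^{\otimes k}, as matrices indexed by tidx k *)
Definition op (k : nat) := tidx k -> tidx k -> C.

Definition opmul k (A B : op k) : op k :=
  fun s t => \sum_(u : tidx k) A s u * B u t.

Definition optr k (A : op k) : C := \sum_(s : tidx k) A s s.

Definition psd_op k (A : op k) : Prop :=
  (forall s t, A t s = (A s t)^*) /\
  (forall v : tidx k -> C,
      0 <= \sum_(s : tidx k) \sum_(t : tidx k) (v s)^* * A s t * v t).

Definition psd_mx (X : 'M[C]_d) : Prop :=
  (forall i j, X j i = (X i j)^*) /\
  (forall v : 'I_d -> C,
      0 <= \sum_(i < d) \sum_(j < d) (v i)^* * X i j * v j).

Definition tens k (Y : 'I_k -> 'M[C]_d) : op k :=
  fun s t => \prod_(i < k) Y i (s i) (t i).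

Definition ext_one r (X : 'I_r -> 'M[C]_d) : 'I_r.+1 -> 'M[C]_d :=
  fun i => if unlift ord_max i is Some j then X j else 1%:M.

(* partial trace over the first r tensor factors of (C^d)^{\otimes (r+1)} *)
Definition ptrace r (Z : op r.+1) : 'M[C]_d :=
  \matrix_(a < d, b < d)
    \sum_(s : tidx r.+1 | s ord_max == a)
       Z s [ffun i => if i == ord_max then b else s i].

Definition is_state k (rho : op k) : Prop := psd_op rho /\ optr rho = 1.

Definition is_state_mx (rho : 'M[C]_d) : Prop := psd_mx rho /\ \tr rho = 1.

Definition separable k (rho : op k) : Prop :=
  exists (n : nat) (p : 'I_n -> C) (rhos : 'I_n -> 'I_k -> 'M[C]_d),
    [/\ forall l, 0 <= p l,
        \sum_(l < n) p l = 1,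
        forall l i, is_state_mx (rhos l i) &
        forall s t, rho s t = \sum_(l < n) p l * tens (rhos l) s t].

Definition block_positive k (B : op k) : Prop :=
  forall rho, separable rho -> 0 <= optr (opmul B rho).

Definition entanglement_witness k (W : op k) : Prop :=
  block_positive W /\ exists sigma, is_state sigma /\ optr (opmul W sigma) < 0.

Definition optimal_witness k (W : op k) : Prop :=
  entanglement_witness W /\
  exists rho, separable rho /\ optr (opmul W rho) = 0.

Definition unitary_invariant k (W : op k) : Prop :=
  forall U : 'M[C]_d, U \is unitarymx ->
    opmul (opmul (tens (fun _ => U)) W) (tens (fun _ => U ^t*)) = W.

Definition upd r (X : 'I_r -> 'M[C]_d) (i : 'I_r) (Y : 'M[C]_d) :=
  fun j => if j == i then Y else X j.

Definition multilinear r (f : ('I_r -> 'M[C]_d) -> 'M[C]_d) : Prop :=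
  forall (X : 'I_r -> 'M[C]_d) (i : 'I_r) (a : C) (Y Z : 'M[C]_d),
    f (upd X i (a *: Y + Z)) = a *: f (upd X i Y) + f (upd X i Z).

Definition unitary_equivariant r (f : ('I_r -> 'M[C]_d) -> 'M[C]_d) : Prop :=
  forall (U : 'M[C]_d) (X : 'I_r -> 'M[C]_d), U \is unitarymx ->
    f (fun i => U *m X i *m U ^t*) = U *m f X *m U ^t*.

Definition positive_map r (f : ('I_r -> 'M[C]_d) -> 'M[C]_d) : Prop :=
  forall X : 'I_r -> 'M[C]_d, (forall i, psd_mx (X i)) -> psd_mx (f X).

Definition smallest_eigenvalue_zero (A : 'M[C]_d) : Prop :=
  eigenvalue A 0 /\ forall a : C, eigenvalue A a -> 0 <= a.

Definition optimal_map r (f : ('I_r -> 'M[C]_d) -> 'M[C]_d) : Prop :=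
  exists X : 'I_r -> 'M[C]_d,
    (forall i, X i != 0 /\ psd_mx (X i)) /\ smallest_eigenvalue_zero (f X).

End QuantumDefs.

(* Main.v *)
Require Import Defs.
From HB Require Import structures.
From mathcomp Require Import all_boot all_order all_algebra.
From mathcomp Require Import sesquilinear spectral reals complex.
Local Open Scope ring_scope.
From mathcomp Require Import ring.
Import GRing.Theory Num.Theory Order.TTheory.
Set Implicit Arguments.
Unset Strict Implicit.

Definition fupd (I J : finType) (w : {ffun I -> J}) (i : I) (a : J) : {ffun I -> J} :=
  [ffun j => if j == i then a else w j].

Lemma fupd_eq (I J : finType) (w : {ffun I -> J}) i a : fupd w i a i = a.
Proof. by rewrite ffunE eqxx. Qed.
Lemma fupd_neq (I J : finType) (w : {ffun I -> J}) i a j : j != i -> fupd w i a j = w j.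
Proof. by rewrite ffunE => /negbTE ->. Qed.

Lemma sum_split (T : Type) (idx : T) (op : Monoid.com_law idx) (I J : finType)
  (i0 : I) (j0 : J) (P : pred {ffun I -> J}) (G : {ffun I -> J} -> T) :
  \big[op/idx]_(w | P w) G w =
  \big[op/idx]_(w : {ffun I -> J} | w i0 == j0) \big[op/idx]_(a | P (fupd w i0 a)) G (fupd w i0 a).
Proof.
rewrite (partition_big (fun w : {ffun I -> J} => w i0) xpredT) //=.
rewrite [RHS](exchange_big_dep xpredT) //=.
apply: eq_bigr => a _.
rewrite (reindex_onto (fun w => fupd w i0 a) (fun w => fupd w i0 j0)).
  apply: eq_bigl => w; rewrite fupd_eq eqxx andbT andbC; congr (_ && _).
  apply/eqP/eqP => [<-|H]; first by rewrite /fupd ffunE eqxx.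
  by apply/ffunP => j; rewrite /fupd !ffunE; case: eqP => // ->; rewrite H.
move=> w /andP[_ /eqP wa]; apply/ffunP => j; rewrite /fupd !ffunE.
by case: eqP => // ->; rewrite wa.
Qed.

Section Exp.
Variables (R : realType) (d r : nat).
Local Notation C := (R[i]).
Variable f : ('I_r -> 'M[C]_d) -> 'M[C]_d.
Hypothesis fML : multilinear f.

Lemma upd_same (X : 'I_r -> 'M[C]_d) i : upd X i (X i) = X.
Proof. by apply: boolp.funext => j; rewrite /upd; case: eqP => // ->. Qed.

Lemma f_upd0 X i : f (upd X i 0) = 0.
Proof.
have H := fML X i 1 0 0; rewrite scaler0 addr0 scale1r in H.
by have := congr1 (fun x => x - f (upd X i 0)) H; rewrite subrr addrK => <-.
Qed.

Lemma f_upd_sum X i (I : Type) (s : seq I) (P : pred I) (c : I -> C)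
   (Y : I -> 'M[C]_d) :
  f (upd X i (\sum_(k <- s | P k) c k *: Y k)) =
  \sum_(k <- s | P k) c k *: f (upd X i (Y k)).
Proof.
apply: (big_rec2 (fun y1 y2 => f (upd X i y1) = y2)); first exact: f_upd0.
by move=> k y1 y2 _ <-; rewrite fML.
Qed.

Variable j0 : 'I_d.
Local Notation p0 := (j0, j0).

Definition Ew (w : {ffun 'I_r -> 'I_d * 'I_d}) : 'I_r -> 'M[C]_d :=
  fun i => delta_mx (w i).1 (w i).2.

Lemma mx_expand (M : 'M[C]_d) :
  M = \sum_(p : 'I_d * 'I_d) M p.1 p.2 *: delta_mx p.1 p.2.
Proof. by rewrite {1}(matrix_sum_delta M) pair_bigA. Qed.

Definition mask n (w : {ffun 'I_r -> 'I_d * 'I_d}) :=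
  [forall i : 'I_r, (n <= i)%N ==> (w i == p0)].
Definition Yn n (X : 'I_r -> 'M[C]_d) (w : {ffun 'I_r -> 'I_d * 'I_d}) :=
  fun i : 'I_r => if (i < n)%N then delta_mx (w i).1 (w i).2 else X i.

Lemma exp_step n : (n <= r)%N -> forall X, f X =
  \sum_(w | mask n w) (\prod_(i : 'I_r | (i < n)%N) X i (w i).1 (w i).2)
      *: f (Yn n X w).
Proof.
elim: n => [_ X|n IH ltnr X].
  rewrite (big_pred1 [ffun=> p0]).
    rewrite big_pred0 // scale1r; congr f.
  move=> w /=; apply/forallP/eqP => [H|->].
    by apply/ffunP => i; rewrite ffunE; exact/eqP/(implyP (H i)).
  by move=> i; rewrite ffunE eqxx implybT.
pose i0 : 'I_r := Ordinal ltnr.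
symmetry; rewrite (sum_split _ i0 p0) (IH (ltnW ltnr) X).
rewrite [RHS]big_mkcond [LHS]big_mkcond; apply: eq_bigr => w _.
case: (boolP (mask n w)) => Hm.
  have wi0 : w i0 == p0 := implyP (forallP Hm i0) (leqnn n).
  rewrite wi0 (eq_bigl xpredT); last first.
    move=> a; apply/forallP => i; rewrite ffunE.
    case: (eqVneq i i0) => [->|ne]; first by rewrite /= ltnn.
    by apply/implyP => le; exact: (implyP (forallP Hm i) (ltnW le)).
  have -> : Yn n X w = upd (Yn n X w) i0
      (\sum_(p : 'I_d * 'I_d) X i0 p.1 p.2 *: delta_mx p.1 p.2).
    apply: boolp.funext => j; rewrite /upd; case: eqP => [->|] //.
    by rewrite -mx_expand /Yn ltnn.
  rewrite f_upd_sum scaler_sumr; apply: eq_bigr => a _.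
  rewrite scalerA; congr (_ *: _).
    rewrite (bigD1 i0) /=; last by rewrite ltnSn.
    rewrite ffunE eqxx mulrC; congr (_ * _).
    apply: eq_big => [i|i /andP[_ ne]]; last by rewrite ffunE (negbTE ne).
    rewrite ltnS leq_eqVlt -(inj_eq val_inj) /=.
    by case: (ltngtP i n).
  congr f; apply: boolp.funext => j; rewrite /upd /Yn ffunE.
  case: (eqVneq j i0) => [->|ne]; first by rewrite /= ltnSn.
  rewrite ltnS leq_eqVlt; case: (ltngtP j n) => //= H.
  by case/eqP: ne; apply: val_inj.
case: ifP => // wi0; rewrite big_pred0 // => a; apply/negbTE.
rewrite /mask in Hm; case/forallPn: Hm => i; rewrite negb_imply => /andP[le ne].
apply/forallPn; exists i; rewrite negb_imply ffunE.
have ne0 : i != i0.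
  by apply: contraNneq ne => ->.
rewrite (negbTE ne0) ne andbT ltn_neqAle le andbT.
by apply: contra ne0 => /eqP H; apply/eqP/val_inj.
Qed.

Lemma EXP X : f X = \sum_(w : {ffun 'I_r -> 'I_d * 'I_d}) (\prod_i X i (w i).1 (w i).2) *: f (Ew w).
Proof.
rewrite (exp_step (leqnn r) X); apply: eq_big => [w|w _].
  by apply/forallP => i; rewrite leqNgt ltn_ord.
congr (_ *: f _); first by apply: eq_bigl => i; rewrite ltn_ord.
by apply: boolp.funext => i; rewrite /Yn ltn_ord.
Qed.
End Exp.
Section Bsec.
Variables (R : realType) (d r : nat).
Local Notation C := (R[i]).
Variable f : ('I_r -> 'M[C]_d) -> 'M[C]_d.
Hypothesis fML : multilinear f.

Definition Bop : op R d r.+1 := fun s t =>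
  f (fun i => delta_mx (t (lift ord_max i)) (s (lift ord_max i))) (s ord_max) (t ord_max).

Definition h1 (a : 'I_d) (w : {ffun 'I_r -> 'I_d * 'I_d}) : tidx d r.+1 :=
  [ffun i : 'I_r.+1 => if unlift ord_max i is Some j then (w j).2 else a].
Definition h2 (b : 'I_d) (w : {ffun 'I_r -> 'I_d * 'I_d}) : tidx d r.+1 :=
  [ffun i : 'I_r.+1 => if unlift ord_max i is Some j then (w j).1 else b].

Lemma split_last (F : tidx d r.+1 -> C) :
  \sum_(s : tidx d r.+1) F s = \sum_(a : 'I_d) \sum_(s : tidx d r.+1 | s ord_max == a) F s.
Proof. exact: (partition_big (fun s : tidx d r.+1 => s ord_max) xpredT). Qed.

Lemma reidx a b (G : tidx d r.+1 -> tidx d r.+1 -> C) :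
  \sum_(s : tidx d r.+1 | s ord_max == a) \sum_(u : tidx d r.+1 | u ord_max == b) G s u
  = \sum_(w : {ffun 'I_r -> 'I_d * 'I_d}) G (h1 a w) (h2 b w).
Proof.
rewrite pair_big_dep.
rewrite (reindex_onto (fun w => (h1 a w, h2 b w))
   (fun p : tidx d r.+1 * tidx d r.+1 =>
      [ffun j => (p.2 (lift ord_max j), p.1 (lift ord_max j))])) /=.
  apply: eq_bigl => w; rewrite !ffunE unlift_none !eqxx /=.
  apply/eqP/ffunP => j; rewrite !ffunE liftK; by case: (w j).
move=> [s u] /= /andP[/eqP sa /eqP ub]; congr pair; apply/ffunP => i;
  rewrite !ffunE; case: unliftP => [j ->|->]; rewrite ?ffunE //.
Qed.

Lemma full (G : tidx d r.+1 -> tidx d r.+1 -> C) :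
  \sum_(s : tidx d r.+1) \sum_(u : tidx d r.+1) G s u =
  \sum_(a : 'I_d) \sum_(b : 'I_d) \sum_(w : {ffun 'I_r -> 'I_d * 'I_d}) G (h1 a w) (h2 b w).
Proof.
rewrite split_last; apply: eq_bigr => a _.
under eq_bigr => s _ do rewrite split_last.
by rewrite exchange_big; apply: eq_bigr => b _; rewrite reidx.
Qed.

Lemma widen_lift (j : 'I_r) : widen_ord (leqnSn r) j = lift ord_max j.
Proof. by apply: val_inj; rewrite /= /bump leqNgt ltn_ord. Qed.

Lemma tens_h (Y : 'I_r.+1 -> 'M[C]_d) a b w :
  tens Y (h2 b w) (h1 a w) =
  (\prod_j Y (lift ord_max j) (w j).1 (w j).2) * Y ord_max b a.
Proof.
rewrite /tens big_ord_recr /=; congr (_ * _).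
  by apply: eq_bigr => j _; rewrite widen_lift !ffunE liftK.
by rewrite !ffunE unlift_none.
Qed.

Lemma B_h a b w : Bop (h1 a w) (h2 b w) = f (Ew R w) a b.
Proof.
rewrite /Bop !ffunE unlift_none; congr (f _ _ _).
by apply: boolp.funext => i; rewrite /Ew !ffunE liftK.
Qed.

Variable j0 : 'I_d.

Lemma TRACE (Y : 'I_r.+1 -> 'M[C]_d) :
  \sum_(s : tidx d r.+1) \sum_(u : tidx d r.+1) Bop s u * tens Y u s =
  \sum_(a : 'I_d) \sum_(b : 'I_d) f (fun j => Y (lift ord_max j)) a b * Y ord_max b a.
Proof.
rewrite full; apply: eq_bigr => a _; apply: eq_bigr => b _.
rewrite (EXP fML j0) summxE mulr_suml; apply: eq_bigr => w _.
by rewrite B_h tens_h !mxE; ring.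
Qed.

End Bsec.
Local Open Scope sesquilinear_scope.

Section Psd.
Variable R : realType.
Local Notation C := (R[i]).

Definition psdg (I : finType) (A : I -> I -> C) :=
  (forall s t, A t s = (A s t)^*) /\
  (forall v : I -> C, 0 <= \sum_(s : I) \sum_(t : I) (v s)^* * A s t * v t).

Lemma psd_mx_g d (X : 'M[C]_d) : psd_mx X <-> psdg (fun i j => X i j).
Proof. by []. Qed.

Lemma psd_op_g d k (X : op R d k) : psd_op X <-> psdg X.
Proof. by []. Qed.

Lemma rank1_psd (I : finType) (x : I -> C) : psdg (fun s t => x s * (x t)^*).
Proof.
split; first by move=> s t; rewrite rmorphM /= conjCK mulrC.
move=> v.
have -> : \sum_s \sum_t (v s)^* * (x s * (x t)^*) * v t =
   (\sum_t (x t)^* * v t)^* * (\sum_t (x t)^* * v t).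
  rewrite rmorph_sum /= mulr_suml; apply: eq_bigr => s _.
  rewrite mulr_sumr; apply: eq_bigr => t _; rewrite rmorphM /= conjCK; ring.
by rewrite mulrC mul_conjC_ge0.
Qed.

Lemma psdg_scale (I : finType) (A : I -> I -> C) (c : C) :
  0 <= c -> psdg A -> psdg (fun s t => c * A s t).
Proof.
move=> c0 [H1 H2]; have cr : c^* = c by apply/CrealP; exact: ger0_real.
split; first by move=> s t; rewrite rmorphM /= cr H1.
move=> v; have -> : \sum_s \sum_t (v s)^* * (c * A s t) * v t =
   c * \sum_s \sum_t (v s)^* * A s t * v t.
  rewrite mulr_sumr; apply: eq_bigr => s _.
  rewrite mulr_sumr; apply: eq_bigr => t _; ring.
by rewrite mulr_ge0.
Qed.

Lemma entry_sum d (A M B : 'M[C]_d) p q :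
  (A *m M *m B) p q = \sum_a \sum_b A p a * M a b * B b q.
Proof.
rewrite !mxE exchange_big; apply: eq_bigr => b _.
by rewrite mxE mulr_suml.
Qed.

Lemma entry_delta d (A B : 'M[C]_d) i j p q :
  (A *m delta_mx i j *m B) p q = A p i * B j q.
Proof.
rewrite entry_sum (bigD1 i) //= [X in _ + X]big1 ?addr0; last first.
  move=> a; rewrite ?andTb => /negbTE ne; apply: big1 => b _; rewrite mxE ne /= mulr0 mul0r //.
rewrite (bigD1 j) //= [X in _ + X]big1 ?addr0; last first.
  by move=> b; rewrite ?andTb => /negbTE ne; rewrite mxE ne andbF mulr0 mul0r.
by rewrite mxE !eqxx mulr1.
Qed.

Lemma trpsd d (A Z : 'M[C]_d) : psd_mx A -> psd_mx Z ->
  0 <= \sum_a \sum_b A a b * Z b a.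
Proof.
move=> [_ hA] [hZ1 hZ2].
have ZH : Z^t* = Z by apply/matrixP => i j; rewrite !mxE hZ1 conjCK.
have Zn : Z \is normalmx by apply/normalmxP; rewrite ZH.
move/orthomx_spectralP: Zn.
set P := spectralmx Z; set D := spectral_diag Z => ZE.
have PU : P \is unitarymx := spectral_unitarymx Z.
rewrite invmx_unitary // in ZE.
have Zba : forall b a, Z b a = \sum_k (P k b)^* * D 0 k * P k a.
  by move=> b a; rewrite ZE mul_mx_diag !mxE; apply: eq_bigr => k _; rewrite !mxE.
have Dk : forall k, 0 <= D 0 k.
  move=> k; have : P *m Z *m P^t* = diag_mx D.
    by rewrite ZE !mulmxA (unitarymxP PU) mul1mx mulmxtVK.
  move/matrixP/(_ k k); rewrite entry_sum mxE eqxx mulr1n => <-.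
  have := hZ2 (fun j => (P k j)^*); under eq_bigr => a _ do
    under eq_bigr => b _ do rewrite conjCK.
  by under [X in _ -> _ <= X]eq_bigr => a _ do under eq_bigr => b _ do rewrite !mxE.
under eq_bigr => a _ do under eq_bigr => b _ do rewrite Zba mulr_sumr.
under eq_bigr => a _ do rewrite exchange_big.
rewrite exchange_big; apply: sumr_ge0 => k _.
have := hA (fun j => (P k j)^*) => H.
have -> : \sum_a \sum_b A a b * ((P k b)^* * D 0 k * P k a) =
   D 0 k * \sum_a \sum_b ((P k a)^*)^* * A a b * (P k b)^*.
  rewrite mulr_sumr; apply: eq_bigr => a _.
  rewrite mulr_sumr; apply: eq_bigr => b _; rewrite conjCK; ring.
exact: mulr_ge0.
Qed.

End Psd.
Section Main.
Variables (R : realType) (d r : nat).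
Local Notation C := (R[i]).
Variable f : ('I_r -> 'M[C]_d) -> 'M[C]_d.
Hypothesis fML : multilinear f.
Variable j0 : 'I_d.

Lemma Bop_bp (fpos : positive_map f) : block_positive (Bop f).
Proof.
move=> rho [n [p [rhos [p0 p1 st rhoE]]]].
rewrite /optr /opmul.
have -> : \sum_(s : tidx d r.+1) \sum_(u : tidx d r.+1) Bop f s u * rho u s =
   \sum_(l < n) p l * \sum_(s : tidx d r.+1) \sum_(u : tidx d r.+1)
        Bop f s u * tens (rhos l) u s.
  rewrite (eq_bigr (fun s => \sum_(l < n) p l * \sum_(u : tidx d r.+1)
        Bop f s u * tens (rhos l) u s)); last first.
    move=> s _.
    rewrite (eq_bigr (fun u => \sum_(l < n) p l * (Bop f s u * tens (rhos l) u s))); last first.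
      by move=> u _; rewrite rhoE mulr_sumr; apply: eq_bigr => l _; ring.
    by rewrite exchange_big; apply: eq_bigr => l _; rewrite mulr_sumr.
  by rewrite exchange_big; apply: eq_bigr => l _; rewrite mulr_sumr.
apply: sumr_ge0 => l _; apply: mulr_ge0 => //.
rewrite (TRACE fML j0); apply: trpsd; last exact: (st l ord_max).1.
by apply: fpos => j; exact: (st l _).1.
Qed.

Lemma tens_hl (Y : 'I_r.+1 -> 'M[C]_d) s a w :
  tens Y s (h1 a w) =
  (\prod_j Y (lift ord_max j) (s (lift ord_max j)) (w j).2) * Y ord_max (s ord_max) a.
Proof.
rewrite /tens big_ord_recr /=; congr (_ * _).
  by apply: eq_bigr => j _; rewrite widen_lift !ffunE liftK.
by rewrite !ffunE unlift_none.
Qed.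

Lemma tens_hr (Y : 'I_r.+1 -> 'M[C]_d) t b w :
  tens Y (h2 b w) t =
  (\prod_j Y (lift ord_max j) (w j).1 (t (lift ord_max j))) * Y ord_max b (t ord_max).
Proof.
rewrite /tens big_ord_recr /=; congr (_ * _).
  by apply: eq_bigr => j _; rewrite widen_lift !ffunE liftK.
by rewrite !ffunE unlift_none.
Qed.

Lemma Bop_inv (fEq : unitary_equivariant f) : unitary_invariant (Bop f).
Proof.
move=> U hU; apply: boolp.funext => s; apply: boolp.funext => t.
rewrite /opmul.
under eq_bigr => v _ do rewrite mulr_suml.
rewrite exchange_big /= full.
pose Z := fun i : 'I_r => delta_mx (t (lift ord_max i)) (s (lift ord_max i)) : 'M[C]_d.
pose X := fun i => U^t* *m Z i *m U.
have fX : f X = U^t* *m f Z *m U.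
  by have := fEq (U^t*) Z; rewrite trmxC_unitary trmxCK => /(_ hU).
have BE : Bop f s t = (U *m f X *m U^t*) (s ord_max) (t ord_max).
  by rewrite fX !mulmxA (unitarymxP hU) mul1mx mulmxtVK.
rewrite BE entry_sum.
apply: eq_bigr => a _; apply: eq_bigr => b _.
rewrite (EXP fML j0 X) summxE mulr_sumr mulr_suml; apply: eq_bigr => w _.
rewrite [(_ *: f _) _ _]mxE tens_hl tens_hr B_h.
rewrite [in RHS](eq_bigr (fun j => U^t* (w j).1 (t (lift ord_max j)) * U (s (lift ord_max j)) (w j).2));
  last by move=> j _; rewrite /X entry_delta.
rewrite big_split /=; ring.
Qed.

End Main.
Section Psd2.
Variables (R : realType) (d : nat).
Local Notation C := (R[i]).

Lemma psd_ext (M : 'M[C]_d) (A : 'I_d -> 'I_d -> C) :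
  (forall p q, M p q = A p q) -> psdg A -> psd_mx M.
Proof.
move=> E hA; have eqA : A = (fun p q => M p q).
  by apply: boolp.funext => p; apply: boolp.funext => q; rewrite E.
by rewrite eqA in hA; exact: hA.
Qed.

Lemma psd_rank1_mx (x : 'I_d -> C) : psd_mx (\matrix_(p, q) (x p * (x q)^*)).
Proof. by apply: (psd_ext (A := fun p q => x p * (x q)^*)) => [p q|]; [rewrite mxE | exact: rank1_psd]. Qed.

Lemma psd_scale_mx (c : C) (M : 'M[C]_d) : 0 <= c -> psd_mx M -> psd_mx (c *: M).
Proof.
move=> c0 hM; apply: (psd_ext (A := fun p q => c * M p q)) => [p q|]; first by rewrite mxE.
exact: psdg_scale.
Qed.

Lemma psd_adj (M : 'M[C]_d) : psd_mx M -> M^t* = M.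
Proof. by move=> [h1 _]; apply/matrixP => i j; rewrite !mxE h1 conjCK. Qed.

Lemma psd_spec (Z : 'M[C]_d) : psd_mx Z -> exists (P : 'M[C]_d) (D : 'rV[C]_d),
  [/\ P \is unitarymx, Z = P^t* *m diag_mx D *m P & forall k, 0 <= D 0 k].
Proof.
move=> hZ; have [hZ1 hZ2] := hZ.
have Zn : Z \is normalmx by apply/normalmxP; rewrite psd_adj.
move/orthomx_spectralP: Zn.
set P := spectralmx Z; set D := spectral_diag Z => ZE.
have PU : P \is unitarymx := spectral_unitarymx Z.
rewrite invmx_unitary // in ZE.
exists P, D; split => // k.
have : P *m Z *m P^t* = diag_mx D.
  by rewrite ZE !mulmxA (unitarymxP PU) mul1mx mulmxtVK.
move/matrixP/(_ k k); rewrite entry_sum mxE eqxx mulr1n => <-.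
have := hZ2 (fun j => (P k j)^*); under eq_bigr => a _ do
  under eq_bigr => b _ do rewrite conjCK.
by under [X in _ -> _ <= X]eq_bigr => a _ do under eq_bigr => b _ do rewrite !mxE.
Qed.

Lemma tr_pos (M : 'M[C]_d) : psd_mx M -> M != 0 -> 0 < \tr M.
Proof.
move=> hM nM; have [P [D [PU ME D0]]] := psd_spec hM.
have trE : \tr M = \sum_k D 0 k.
  by rewrite ME mxtrace_mulC mulmxA (unitarymxP PU) mul1mx mxtrace_diag.
rewrite trE lt_def sumr_ge0 // andbT; apply/eqP => H.
have Dz : forall k, D 0 k = 0 by move=> k; apply: (psumr_eq0P _ H).
case/eqP: nM; rewrite ME.
have -> : diag_mx D = 0.
  by apply/matrixP => i j; rewrite !mxE Dz mul0rn.
by rewrite mulmx0 mul0mx.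
Qed.

Lemma norm_pos (I : finType) (x : I -> C) : (exists i, x i != 0) ->
  0 < \sum_i x i * (x i)^*.
Proof.
move=> [i xi]; rewrite lt_def sumr_ge0 ?andbT => [|j _]; last exact: mul_conjC_ge0.
apply/eqP => H; have := psumr_eq0P (fun j _ => mul_conjC_ge0 (x j)) H (i := i) isT.
by move/eqP; rewrite mul_conjC_eq0 (negbTE xi).
Qed.

Definition om (m : 'I_4) : C := 'i ^+ m.
Definition xv (a b : 'I_d) (m : 'I_4) (p : 'I_d) : C := (p == a)%:R + om m * (p == b)%:R.
Definition dP a b m : 'M[C]_d := \matrix_(p, q) (xv a b m p * (xv a b m q)^*).

Lemma dP_psd a b m : psd_mx (dP a b m).
Proof. exact: psd_rank1_mx. Qed.

Lemma delta_decomp a b : delta_mx a b = \sum_(m < 4) (om m / 4) *: dP a b m.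
Proof.
apply/matrixP => p q; rewrite summxE !big_ord_recr big_ord0 /= !mxE /xv /om.
rewrite !rmorphD !rmorphM /= !conjC_nat !rmorphXn /= conjCi.
rewrite -mulnb natrM /=.
have h4 : (4 : C) != 0 by rewrite pnatr_eq0.
have hi := sqrCi C.
field: hi.
by [].
Qed.

Lemma mx_decomp (M : 'M[C]_d) :
  M = \sum_(k : 'I_d * 'I_d * 'I_4) (M k.1.1 k.1.2 * (om k.2 / 4)) *: dP k.1.1 k.1.2 k.2.
Proof.
rewrite {1}(mx_expand M).
transitivity (\sum_(p : 'I_d * 'I_d) \sum_(m < 4) (M p.1 p.2 * (om m / 4)) *: dP p.1 p.2 m);
  last by rewrite pair_bigA.
apply: eq_bigr => p _; rewrite delta_decomp scaler_sumr.
by apply: eq_bigr => m _; rewrite scalerA.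
Qed.

Lemma adj_sum (I : finType) (c : I -> C) (P : I -> 'M[C]_d) :
  (\sum_k c k *: P k)^t* = \sum_k (c k)^* *: (P k)^t*.
Proof.
apply/matrixP => p q; rewrite !mxE !summxE rmorph_sum /=.
by apply: eq_bigr => k _; rewrite !mxE rmorphM.
Qed.

End Psd2.

Section Main2.
Variables (R : realType) (d r : nat).
Local Notation C := (R[i]).
Variable f : ('I_r -> 'M[C]_d) -> 'M[C]_d.
Hypothesis fML : multilinear f.
Hypothesis fpos : positive_map f.

Lemma herm_step n : (n <= r)%N -> forall X : 'I_r -> 'M[C]_d,
  (forall i : 'I_r, (n <= i)%N -> psd_mx (X i)) ->
  f (fun i => (X i)^t*) = (f X)^t*.
Proof.
elim: n => [_ X hX|n IH ltnr X hX].
  have -> : (fun i => (X i)^t*) = X.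
    by apply: boolp.funext => i; rewrite psd_adj //; apply: hX.
  by rewrite psd_adj //; apply: fpos => i; apply: hX.
pose i0 : 'I_r := Ordinal ltnr.
have XE : X = upd X i0 (\sum_(k : 'I_d * 'I_d * 'I_4)
     (X i0 k.1.1 k.1.2 * (om R k.2 / 4)) *: dP R k.1.1 k.1.2 k.2).
  by apply: boolp.funext => j; rewrite /upd; case: eqP => [->|] //; exact: mx_decomp.
have XAE : (fun i => (X i)^t*) = upd (fun i => (X i)^t*) i0
   (\sum_(k : 'I_d * 'I_d * 'I_4)
     (X i0 k.1.1 k.1.2 * (om R k.2 / 4))^* *: dP R k.1.1 k.1.2 k.2).
  apply: boolp.funext => j; rewrite /upd; case: eqP => [->|] //.
  rewrite {1}(mx_decomp (X i0)) adj_sum; apply: eq_bigr => k _.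
  by rewrite psd_adj //; apply: dP_psd.
rewrite XAE (f_upd_sum fML) [in RHS]XE (f_upd_sum fML) adj_sum.
apply: eq_bigr => k _; congr (_ *: _).
rewrite -(IH (ltnW ltnr)); last first.
  move=> i le; rewrite /upd; case: eqP => [_|ne]; first exact: dP_psd.
  apply: hX; have nin : nat_of_ord i != n.
    by apply/eqP => e; apply: ne; apply: val_inj.
  by rewrite ltn_neqAle eq_sym nin le.
congr f; apply: boolp.funext => j; rewrite /upd; case: eqP => // _.
by rewrite psd_adj //; apply: dP_psd.
Qed.

Lemma HERM X : f (fun i => (X i)^t*) = (f X)^t*.
Proof. by apply: (herm_step (leqnn r)) => i; rewrite leqNgt ltn_ord. Qed.

Lemma Bop_herm s t : Bop f t s = (Bop f s t)^*.
Proof.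
rewrite /Bop.
set Z := fun i : 'I_r => delta_mx (t (lift ord_max i)) (s (lift ord_max i)) : 'M[C]_d.
have -> : (fun i : 'I_r => delta_mx (s (lift ord_max i)) (t (lift ord_max i)) : 'M[C]_d)
   = (fun i => (Z i)^t*).
  apply: boolp.funext => i; apply/matrixP => p q; rewrite /Z !mxE conjC_nat.
  by rewrite andbC.
by rewrite HERM !mxE.
Qed.

Variable j0 : 'I_d.

Lemma fscale (c : 'I_r -> C) (X : 'I_r -> 'M[C]_d) :
  f (fun j => c j *: X j) = (\prod_j c j) *: f X.
Proof.
rewrite !(EXP fML j0) scaler_sumr; apply: eq_bigr => w _.
rewrite scalerA -big_split; congr (_ *: _).
by apply: eq_bigr => j _; rewrite mxE.
Qed.

End Main2.
Local Close Scope sesquilinear_scope.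

Theorem corollary2 (R : realType) (d r : nat) (hd : (0 < d)%N) (hr : (0 < r)%N)
  (f : ('I_r -> 'M[R[i]]_d) -> 'M[R[i]]_d) :
  multilinear f -> unitary_equivariant f -> positive_map f ->
  exists B : op R d r.+1,
    [/\ block_positive B,
        unitary_invariant B,
        (forall X : 'I_r -> 'M[R[i]]_d, f X = ptrace (opmul B (tens (ext_one X)))) &
        (optimal_map f -> ~ psd_op B -> optimal_witness B /\ unitary_invariant B)].
Proof.
move=> fML fEq fpos.
pose j0 : 'I_d := Ordinal hd.
exists (Bop f); split.
- exact: (Bop_bp fML j0 fpos).
- exact: (Bop_inv fML j0 fEq).
- move=> X; apply/matrixP => a b.
  rewrite (EXP fML j0 X) summxE /ptrace mxE.
  pose tb (s : tidx d r.+1) : tidx d r.+1 := [ffun i => if i == ord_max then b else s i].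
  rewrite (eq_bigr (fun s => \sum_(u : tidx d r.+1 | u ord_max == b)
        Bop f s u * tens (ext_one X) u (tb s))); last first.
    move=> s _; rewrite /opmul (bigID (fun u : tidx d r.+1 => u ord_max == b)) /=.
    rewrite [X in _ + X]big1 ?addr0 // => u /negbTE ne.
    by rewrite /tens big_ord_recr /= ffunE eqxx /ext_one unlift_none mxE ne mulr0n !mulr0.
  rewrite reidx; apply: eq_bigr => w _.
  rewrite B_h mxE.
  have -> : tb (h1 a w) = h1 b w.
    apply/ffunP => i; rewrite /h1 !ffunE; case: unliftP => [j ->|->]; rewrite ?eqxx //.
    by have := neq_lift ord_max j; rewrite eq_sym => /negbTE ->.
  rewrite tens_h /ext_one unlift_none mxE eqxx mulr1n mulr1.
  under [in RHS]eq_bigr => j _ do rewrite liftK.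
  by rewrite mulrC.
- move=> [Xt [hXt hmin]] nB; split; last exact: (Bop_inv fML j0 fEq).
  have bp := Bop_bp fML j0 fpos.
  split; first split => //.
  + pose Q (v : tidx d r.+1 -> R[i]) := \sum_(s : tidx d r.+1) \sum_(t : tidx d r.+1)
        (v s)^* * Bop f s t * v t.
    have [v hv] : exists v, ~ (0 <= Q v).
      apply: boolp.contrapT => H; apply: nB; split.
        by move=> s t; exact: (Bop_herm fML fpos).
      move=> v; apply: boolp.contrapT => Hv; apply: H; by exists v.
    have Qr : Q v \is Num.real.
      apply/CrealP; rewrite /Q rmorph_sum /= exchange_big; apply: eq_bigr => x _.
      rewrite rmorph_sum /=; apply: eq_bigr => y _.
      rewrite !rmorphM /= conjCK -(Bop_herm fML fpos); ring.
    have Qlt : Q v < 0 by rewrite real_ltNge ?real0 //; exact/negP.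
    have vnz : exists s, v s != 0.
      apply: boolp.contrapT => H; apply: hv.
      have v0 : forall s, v s = 0.
        by move=> s; apply/eqP/negPn/negP => Hs; apply: H; exists s.
      by rewrite /Q big1 // => s _; rewrite big1 // => t _; rewrite !v0 mulr0.
    have Npos := norm_pos vnz; set N := \sum_i v i * (v i)^* in Npos.
    exists (fun u s => N^-1 * (v u * (v s)^*)); split; first split.
    * apply: psdg_scale; [by rewrite invr_ge0 ltW | exact: rank1_psd].
    * by rewrite /optr -mulr_sumr mulVf // lt0r_neq0.
    * rewrite /optr /opmul.
      have -> : \sum_(s : tidx d r.+1) \sum_(u : tidx d r.+1)
          Bop f s u * (N^-1 * (v u * (v s)^*)) = N^-1 * Q v.
        rewrite /Q mulr_sumr; apply: eq_bigr => s _.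
        by rewrite mulr_sumr; apply: eq_bigr => u _; ring.
      by rewrite pmulr_rlt0 ?invr_gt0.
  + have [hev _] := hmin; move/eigenvalueP: hev => [v hv vnz].
    pose y := fun p => (v 0 p)^*.
    have ynz : exists p, y p != 0.
      apply: boolp.contrapT => H; case/eqP: vnz; apply/rowP => p; rewrite mxE; apply/eqP.
      by apply/negPn/negP => Hp; apply: H; exists p; rewrite /y conjC_eq0.
    have Npos := norm_pos ynz; set N := \sum_i y i * (y i)^* in Npos.
    have trpos : forall j, 0 < \tr (Xt j).
      by move=> j; apply: tr_pos; [exact: (hXt j).2 | exact: (hXt j).1].
    pose Mv := N^-1 *: \matrix_(p, q) (y p * (y q)^*) : 'M[R[i]]_d.
    pose rhos := fun (l : 'I_1) (i : 'I_r.+1) =>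
      if unlift ord_max i is Some j then (\tr (Xt j))^-1 *: Xt j else Mv.
    exists (tens (rhos ord0)); split.
    * exists 1%N, (fun _ => 1), rhos; split.
      - by move=> l; rewrite ler01.
      - by rewrite big_ord1.
      - move=> l i; rewrite /rhos; case: (unlift ord_max i) => [j|].
          split; first by apply: psd_scale_mx; [rewrite invr_ge0 ltW | exact: (hXt j).2].
          by rewrite mxtraceZ mulVf // lt0r_neq0.
        split; first by apply: psd_scale_mx; [rewrite invr_ge0 ltW | exact: psd_rank1_mx].
        rewrite mxtraceZ.
        have -> : \tr (\matrix_(p, q) (y p * (y q)^*)) = N.
          by rewrite /N /mxtrace; apply: eq_bigr => p _; rewrite mxE.
        by rewrite mulVf // lt0r_neq0.
      - by move=> s t; rewrite big_ord1 mul1r.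
    * rewrite /optr /opmul (TRACE fML j0).
      have -> : (fun j => rhos ord0 (lift ord_max j)) =
          (fun j => (\tr (Xt j))^-1 *: Xt j).
        by apply: boolp.funext => j; rewrite /rhos liftK.
      rewrite (fscale fML j0).
      have -> : rhos ord0 ord_max = Mv by rewrite /rhos unlift_none.
      have vF : forall b, \sum_a v 0 a * f Xt a b = 0.
        by move=> b; move/matrixP: hv => /(_ 0 b); rewrite scale0r !mxE.
      rewrite exchange_big; apply: big1 => b _.
      rewrite (eq_bigr (fun a => ((\prod_j (\tr (Xt j))^-1) * N^-1 * y b) *
                                 (v 0 a * f Xt a b))); last first.
        by move=> a _; rewrite !mxE /y conjCK; ring.
      by rewrite -mulr_sumr vF mulr0.
Qed.
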